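(* For every density operator $\rho$ on $\mathbb{C}^d$, $$\overline{C}_{\mathcal{R}}(\rho)=\max_{\Lambda\in\mathrm{GIO}}F\big(\Lambda(\rho),|\phi^+\rangle\langle\phi^+|\big),$$ where $F(\rho,\sigma)=\left(\mathrm{tr}\sqrt{\rho^{1/2}\sigma\rho^{1/2}}\right)^2$ is the fidelity (so that the right-hand side equals $\max_{\Lambda\in\mathrm{GIO}}\langle\phi^+|\Lambda(\rho)|\phi^+\rangle$).
   Context: Fix the computational basis $\{|i\rangle\}_{i=0}^{d-1}$ of $\mathbb{C}^d$ as the incoherent basis; $\mathcal{I}$ denotes the set of density operators diagonal in this basis. Let $|\phi^+\rangle=\frac{1}{\sqrt d}\sum_{i=0}^{d-1}|i\rangle$. The robustness of coherence is $C_{\mathcal{R}}(\rho)=\min\{s\ge0: \exists\text{ density operator }\tau,\ (\rho+s\tau)/(1+s)\in\mathcal{I}\}$ and $\overline{C}_{\mathcal{R}}(\rho)=(1+C_{\mathcal{R}}(\rho))/d$. A genuinely incoherent operation (GIO) is a quantum channel (completely positive trace-preserving map) $\Lambda$ on $d\times d$ matrices with $\Lambda(|i\rangle\langle i|)=|i\rangle\langle i|$ for all $i$; equivalently, $\Lambda(\rho)=\tau\circ\rho$ (entrywise/Schur product) for some positive semidefinite matrix $\tau$ with all diagonal entries equal to $1$ (a correlation matrix). *)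

(* Defs.v *)
From mathcomp Require Import all_boot all_algebra.
From mathcomp Require Import reals.
From mathcomp.real_closed Require Import complex.
From Stdlib Require Import ClassicalEpsilon.

Set Implicit Arguments.
Unset Strict Implicit.
Unset Printing Implicit Defensive.

Import GRing.Theory Num.Theory.
Local Open Scope ring_scope.

Section QDefs.
Variable C : numClosedFieldType.

Definition adjmx m n (A : 'M[C]_(m, n)) : 'M[C]_(n, m) := (map_mx Num.conj A)^T.

Definition psd n (A : 'M[C]_n) : Prop :=
  forall v : 'cV[C]_n, 0 <= (adjmx v *m A *m v) 0 0.

Definition density n (rho : 'M[C]_n) : Prop := psd rho /\ \tr rho = 1.

Definition incoherent n (rho : 'M[C]_n) : Prop := density rho /\ is_diag_mx rho.

Definition robustness_feasible n (rho : 'M[C]_n) (s : C) : Prop :=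
  0 <= s /\ exists tau : 'M[C]_n,
    density tau /\ incoherent ((1 + s)^-1 *: (rho + s *: tau)).

Definition is_robustness n (rho : 'M[C]_n) (s : C) : Prop :=
  robustness_feasible rho s /\ forall s', robustness_feasible rho s' -> s <= s'.

Definition normalized_robustness n (s : C) : C := (1 + s) / n%:R.

Definition phi_plus n : 'cV[C]_n := \col_(i < n) (sqrtC (n%:R))^-1.
Definition Phi_plus n : 'M[C]_n := phi_plus n *m adjmx (phi_plus n).

Definition sqrtm n (A : 'M[C]_n) : 'M[C]_n :=
  epsilon (inhabits 0) (fun B : 'M[C]_n => psd B /\ B *m B = A).

Definition fidelity n (rho sigma : 'M[C]_n) : C :=
  (\tr (sqrtm (sqrtm rho *m sigma *m sqrtm rho))) ^+ 2.

(* positivity of an element of M_k (x) M_n, written as a k x k block matrix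
   with blocks B i j : 'M_n *)
Definition block_psd k n (B : 'I_k -> 'I_k -> 'M[C]_n) : Prop :=
  forall v : 'I_k -> 'cV[C]_n,
    0 <= \sum_(i < k) \sum_(j < k) (adjmx (v i) *m B i j *m v j) 0 0.

Definition linear_map n (L : 'M[C]_n -> 'M[C]_n) : Prop :=
  forall (a : C) (X Y : 'M[C]_n), L (a *: X + Y) = a *: L X + L Y.

(* complete positivity: id_k (x) L is positive for every k *)
Definition completely_positive n (L : 'M[C]_n -> 'M[C]_n) : Prop :=
  forall k (B : 'I_k -> 'I_k -> 'M[C]_n),
    block_psd B -> block_psd (fun i j => L (B i j)).

Definition trace_preserving n (L : 'M[C]_n -> 'M[C]_n) : Prop :=
  forall X, \tr (L X) = \tr X.

Definition quantum_channel n (L : 'M[C]_n -> 'M[C]_n) : Prop :=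
  [/\ linear_map L, completely_positive L & trace_preserving L].

Definition GIO n (L : 'M[C]_n -> 'M[C]_n) : Prop :=
  quantum_channel L /\ forall i : 'I_n, L (delta_mx i i) = delta_mx i i.

End QDefs.

(* Main.v *)
Require Import Defs.
From mathcomp Require Import all_boot all_order all_algebra.
From mathcomp Require Import reals.
From mathcomp.real_closed Require Import complex.
From Stdlib Require Import ClassicalEpsilon.
From mathcomp Require Import lra ring.
Import Order.TTheory GRing.Theory Num.Theory.
Set Implicit Arguments.
Unset Strict Implicit.
Unset Printing Implicit Defensive.
Local Open Scope ring_scope.

Section PartA.
Variable C : numClosedFieldType.
Local Notation adj := (@adjmx C _ _).

Lemma adjmxE m n (A : 'M[C]_(m, n)) i j : adjmx A i j = (A j i)^*.
Proof. by rewrite /adjmx !mxE. Qed.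

Lemma adjmxK m n (A : 'M[C]_(m, n)) : adjmx (adjmx A) = A.
Proof. by apply/matrixP => i j; rewrite !adjmxE conjCK. Qed.

Lemma adjmx_mul m n p (A : 'M[C]_(m, n)) (B : 'M[C]_(n, p)) :
  adjmx (A *m B) = adjmx B *m adjmx A.
Proof.
apply/matrixP => i j; rewrite adjmxE !mxE rmorph_sum; apply: eq_bigr => k _.
by rewrite !adjmxE rmorphM mulrC.
Qed.

Lemma adjmxD m n (A B : 'M[C]_(m, n)) : adjmx (A + B) = adjmx A + adjmx B.
Proof. by apply/matrixP => i j; rewrite !mxE rmorphD. Qed.

Lemma adjmxZ m n a (A : 'M[C]_(m, n)) : adjmx (a *: A) = a^* *: adjmx A.
Proof. by apply/matrixP => i j; rewrite !mxE rmorphM. Qed.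

Lemma adjmxN m n (A : 'M[C]_(m, n)) : adjmx (- A) = - adjmx A.
Proof. by apply/matrixP => i j; rewrite !mxE rmorphN. Qed.

Lemma adjmx_tstar m n (A : 'M[C]_(m, n)) : adjmx A = (A ^t*)%sesqui.
Proof. by apply/matrixP => i j; rewrite !mxE. Qed.

Definition bf n (A : 'M[C]_n) (x y : 'cV[C]_n) := (adjmx x *m A *m y) 0 0.

Lemma bfE n (A : 'M[C]_n) x y :
  bf A x y = \sum_i \sum_j (x i 0)^* * A i j * y j 0.
Proof.
rewrite /bf mxE; under eq_bigr do rewrite mxE big_distrl /=.
rewrite exchange_big; apply: eq_bigr => i _; apply: eq_bigr => j _.
by rewrite adjmxE.
Qed.

Lemma bf_conj n (A : 'M[C]_n) x y : (bf A x y)^* = bf (adjmx A) y x.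
Proof.
by rewrite /bf -adjmxE !adjmx_mul adjmxK mulmxA.
Qed.

Lemma bfDl n (A : 'M[C]_n) x y z : bf A (x + y) z = bf A x z + bf A y z.
Proof. by rewrite /bf adjmxD !mulmxDl mxE. Qed.
Lemma bfDr n (A : 'M[C]_n) x y z : bf A x (y + z) = bf A x y + bf A x z.
Proof. by rewrite /bf mulmxDr mxE. Qed.
Lemma bfZl n (A : 'M[C]_n) a x z : bf A (a *: x) z = a^* * bf A x z.
Proof. by rewrite /bf adjmxZ -!scalemxAl mxE. Qed.
Lemma bfZr n (A : 'M[C]_n) a x z : bf A x (a *: z) = a * bf A x z.
Proof. by rewrite /bf -scalemxAr mxE. Qed.
Lemma mxB00 (X Y : 'M[C]_1) : (X - Y) 0 0 = X 0 0 - Y 0 0.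
Proof. by rewrite !mxE. Qed.
Lemma bfB n (A B : 'M[C]_n) x y : bf (A - B) x y = bf A x y - bf B x y.
Proof. by rewrite /bf mulmxBr mulmxBl mxB00. Qed.

Lemma bf_delta n (A : 'M[C]_n) i j : bf A (delta_mx i 0) (delta_mx j 0) = A i j.
Proof.
rewrite /bf.
have -> : adjmx (delta_mx i 0 : 'cV[C]_n) = delta_mx 0 i.
  by apply/matrixP => a b; rewrite adjmxE !mxE rmorph_nat andbC.
by rewrite -rowE -colE !mxE.
Qed.

Lemma qf_zero n (B : 'M[C]_n) : (forall v, bf B v v = 0) -> B = 0.
Proof.
move=> H; apply/matrixP => i j; rewrite mxE.
have h1 := H (delta_mx i 0 + delta_mx j 0).
rewrite !bfDl !bfDr (H (delta_mx i 0)) (H (delta_mx j 0)) !bf_delta in h1.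
have h2 := H (delta_mx i 0 + 'i *: delta_mx j 0).
rewrite !bfDl !bfDr !bfZl !bfZr (H (delta_mx i 0)) (H (delta_mx j 0)) !bf_delta conjCi in h2.
rewrite add0r addr0 in h1; rewrite !mulr0 addr0 add0r in h2.
have e1 : B j i = - B i j by apply/eqP; rewrite -addr_eq0 addrC h1.
rewrite e1 mulrN mulNr opprK -mulrDr in h2.
move/eqP: h2; rewrite mulf_eq0 (negbTE (neq0Ci C)) /= -mulr2n mulrn_eq0 /=.
by move/eqP.
Qed.

Lemma psd_real n (A : 'M[C]_n) v : psd A -> bf A v v \is Num.real.
Proof. by move=> H; apply: ger0_real; exact: H. Qed.

Lemma psd_herm n (A : 'M[C]_n) : psd A -> adjmx A = A.
Proof.
move=> H; apply/eqP; rewrite -subr_eq0; apply/eqP; apply: qf_zero => v.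
rewrite bfB -bf_conj conj_Creal ?subrr //; exact: psd_real.
Qed.


Lemma bf_diag n (d : 'rV[C]_n) x y :
  bf (diag_mx d) x y = \sum_i (x i 0)^* * d 0 i * y i 0.
Proof.
rewrite bfE; apply: eq_bigr => i _; rewrite (bigD1 i) //= big1 => [|j ji].
  by rewrite !mxE eqxx mulr1n addr0.
by rewrite !mxE eq_sym (negbTE ji) mulr0n mulr0 mul0r.
Qed.

Lemma psd_spectral n (A : 'M[C]_n) : psd A -> exists P : 'M[C]_n, exists mu : 'rV[C]_n,
  [/\ P *m adjmx P = 1%:M, adjmx P *m P = 1%:M, forall i, 0 <= mu 0 i &
      A = adjmx P *m diag_mx mu *m P].
Proof.
move=> H; have hA := psd_herm H.
have nA : A \is normalmx by apply/normalmxP; rewrite -!adjmx_tstar hA.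
have /orthomx_spectralP eA := nA.
move: eA; set P := spectralmx A; set mu := spectral_diag A => eA.
have uP : P \is unitarymx := spectral_unitarymx A.
have PPt : P *m adjmx P = 1%:M by rewrite adjmx_tstar; apply/unitarymxP.
have iP : invmx P = adjmx P by rewrite adjmx_tstar invmx_unitary.
have PtP : adjmx P *m P = 1%:M by rewrite -iP mulVmx // spectral_unit.
rewrite iP in eA.
exists P, mu; split => // i.
have <- : bf A (adjmx P *m delta_mx i 0) (adjmx P *m delta_mx i 0) = mu 0 i.
  rewrite /bf adjmx_mul adjmxK eA !mulmxA.
  rewrite -(mulmxA (adjmx (delta_mx i 0))) PPt mulmx1.
  rewrite -(mulmxA (adjmx (delta_mx i 0) *m diag_mx mu)) PPt mulmx1.
  by rewrite -/(bf _ _ _) bf_delta mxE eqxx mulr1n.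
exact: H.
Qed.

Lemma psd_sqrt_ex n (A : 'M[C]_n) : psd A -> exists B, psd B /\ B *m B = A.
Proof.
move=> /psd_spectral [P [mu [PPt PtP mu0 eA]]].
pose s : 'rV[C]_n := map_mx sqrtC mu.
exists (adjmx P *m diag_mx s *m P); split.
  move=> v.
  have -> : (adjmx v *m (adjmx P *m diag_mx s *m P) *m v) 0 0 = bf (diag_mx s) (P *m v) (P *m v).
    by rewrite /bf adjmx_mul !mulmxA.
  rewrite bf_diag; apply: sumr_ge0 => i _.
  rewrite mulrC mulrA mulr_ge0 //; last by rewrite mxE sqrtC_ge0.
  exact: mul_conjC_ge0.
rewrite !mulmxA -(mulmxA (adjmx P *m diag_mx s)) PPt mulmx1.
rewrite -(mulmxA (adjmx P)) mulmx_diag eA; congr (_ *m diag_mx _ *m _).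
by apply/rowP => j; rewrite !mxE -expr2 sqrtCK.
Qed.


Lemma tr_sqrt_rank1 n (B : 'M[C]_n) (w : 'cV[C]_n) :
  psd B -> B *m B = w *m adjmx w -> (\tr B) ^+ 2 = (adjmx w *m w) 0 0.
Proof.
move=> /psd_spectral [P [mu [PPt PtP mu0 eB]]] hB.
have [z ez] : exists z, z = P *m w by eexists.
have hz : diag_mx mu *m diag_mx mu = z *m adjmx z.
  have : P *m (B *m B) *m adjmx P = P *m (w *m adjmx w) *m adjmx P by rewrite hB.
  rewrite eB !mulmxA PPt mul1mx -(mulmxA (diag_mx mu)) PPt mulmx1.
  rewrite -(mulmxA (diag_mx mu *m diag_mx mu)) PPt mulmx1 => ->.
  by rewrite ez adjmx_mul !mulmxA.
have hent : forall i j, mu 0 i * mu 0 i *+ (i == j) = z i 0 * (z j 0)^*.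
  move=> i j; have := congr1 (fun M : 'M[C]_n => M i j) hz.
  by rewrite mulmx_diag !mxE big_ord1 adjmxE.
have trB : \tr B = \sum_i mu 0 i.
  by rewrite eB mxtrace_mulC mulmxA PPt mul1mx mxtrace_diag.
rewrite trB expr2 big_distrl /=.
have -> : \sum_i (mu 0 i * \sum_j mu 0 j) = \sum_i z i 0 * (z i 0)^*.
  apply: eq_bigr => i _; rewrite big_distrr (bigD1 i) //= big1 => [|j ji].
    by rewrite addr0 -(hent i i) eqxx mulr1n.
  suff H : (mu 0 i * mu 0 j) ^+ 2 = 0 by move/eqP: H; rewrite expf_eq0 /= => /eqP.
  have h1 := hent i i; have h2 := hent j j; have h3 := hent i j.
  rewrite !eqxx !mulr1n in h1 h2; rewrite eq_sym (negbTE ji) mulr0n in h3.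
  have -> : (mu 0 i * mu 0 j) ^+ 2 = (mu 0 i * mu 0 i) * (mu 0 j * mu 0 j) by ring.
  rewrite h1 h2.
  have -> : z i 0 * (z i 0)^* * (z j 0 * (z j 0)^*) = (z i 0 * (z j 0)^*) * (z j 0 * (z i 0)^*) by ring.
  by rewrite -h3 mul0r.
have -> : (adjmx w *m w) 0 0 = (adjmx z *m z) 0 0.
  by rewrite ez adjmx_mul -mulmxA (mulmxA (adjmx P)) PtP mul1mx.
by rewrite [RHS]mxE; apply: eq_bigr => i _; rewrite adjmxE mulrC.
Qed.


Lemma sqrtm_spec n (A : 'M[C]_n) : psd A -> psd (sqrtm A) /\ sqrtm A *m sqrtm A = A.
Proof. by move=> H; exact: (epsilon_spec (inhabits 0) _ (psd_sqrt_ex H)). Qed.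

Lemma psd_rank1 n (w : 'cV[C]_n) : psd (w *m adjmx w).
Proof.
move=> v; rewrite mulmxA -(mulmxA (adjmx v *m w)) mxE big_ord1.
have -> : (adjmx w *m v) 0 0 = ((adjmx v *m w) 0 0)^*.
  by rewrite -adjmxE adjmx_mul adjmxK.
exact: mul_conjC_ge0.
Qed.

Lemma fidelity_pure n (X : 'M[C]_n) :
  psd X -> fidelity X (Phi_plus C n) = bf X (phi_plus C n) (phi_plus C n).
Proof.
move=> HX; have [ps ss] := sqrtm_spec HX.
rewrite /fidelity; move: ps ss; set s := sqrtm X => ps ss.
have hs : adjmx s = s := psd_herm ps.
have eY : s *m Phi_plus C n *m s = (s *m phi_plus C n) *m adjmx (s *m phi_plus C n).
  by rewrite adjmx_mul hs /Phi_plus !mulmxA.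
rewrite eY; have [pB sB] := sqrtm_spec (psd_rank1 (s *m phi_plus C n)).
rewrite (tr_sqrt_rank1 pB sB) adjmx_mul hs /bf !mulmxA.
by rewrite -(mulmxA (adjmx (phi_plus C n))) ss.
Qed.

End PartA.

Section PartB.
Variable C : numClosedFieldType.
Variable n : nat.
Implicit Types (L : 'M[C]_n -> 'M[C]_n) (X Y D rho : 'M[C]_n).

Lemma lin0 L : linear_map L -> L 0 = 0.
Proof.
move=> H; have := H 1 0 0; rewrite !scale1r addr0 => e.
by apply: (addrI (L 0)); rewrite addr0 -e.
Qed.
Lemma linD L X Y : linear_map L -> L (X + Y) = L X + L Y.
Proof. by move=> H; rewrite -{1}(scale1r X) H scale1r. Qed.
Lemma linZ L a X : linear_map L -> L (a *: X) = a *: L X.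
Proof. by move=> H; rewrite -(addr0 (a *: X)) H lin0 // addr0. Qed.
Lemma linB L X Y : linear_map L -> L (X - Y) = L X - L Y.
Proof. by move=> H; rewrite addrC -scaleN1r H scaleN1r addrC. Qed.
Lemma lin_sum L (F : 'I_n -> 'M[C]_n) : linear_map L ->
  L (\sum_i F i) = \sum_i L (F i).
Proof.
move=> H; elim/big_rec2: _ => [|i y1 y2 _ <-]; first exact: lin0.
exact: linD.
Qed.

Lemma diag_decomp D : is_diag_mx D -> D = \sum_i D i i *: delta_mx i i.
Proof.
move=> /is_diag_mxP HD; apply/matrixP => a b; rewrite summxE.
rewrite (bigD1 a) //= big1 => [|i ia]; last by by rewrite !mxE [a == i]eq_sym (negbTE ia) mulr0.
rewrite !mxE eqxx /= addr0; case: (eqVneq a b) => [->|ab]; first by rewrite mulr1.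
by rewrite mulr0 HD.
Qed.

Lemma GIO_diag L D : GIO L -> is_diag_mx D -> L D = D.
Proof.
move=> [[Hl _ _] HE] HD; rewrite {1 2}(diag_decomp HD) lin_sum //.
by apply: eq_bigr => i _; rewrite linZ // HE.
Qed.

Lemma CP_psd L X : completely_positive L -> psd X -> psd (L X).
Proof.
move=> HL HX v.
have H1 : block_psd (fun (_ _ : 'I_1) => X).
  by move=> w; rewrite !big_ord1; exact: HX.
have := HL 1%N _ H1 (fun _ => v); by rewrite !big_ord1.
Qed.

Lemma qf_phi X : (0 < n)%N ->
  bf X (phi_plus C n) (phi_plus C n) = (\sum_i \sum_j X i j) / n%:R.
Proof.
move=> n0; rewrite bfE mulr_suml; apply: eq_bigr => i _; rewrite mulr_suml.
apply: eq_bigr => j _; rewrite !mxE.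
have c0 : 0 <= (sqrtC (n%:R : C))^-1 by rewrite invr_ge0 sqrtC_ge0 ler0n.
rewrite conj_Creal ?ger0_real // mulrC mulrA -expr2 exprVn sqrtCK.
by rewrite mulrC.
Qed.

Lemma diag_sum D : is_diag_mx D -> \sum_i \sum_j D i j = \tr D.
Proof.
move=> /is_diag_mxP HD; rewrite /mxtrace; apply: eq_bigr => i _.
rewrite (bigD1 i) //= big1 ?addr0 // => j ji; apply: HD; by rewrite eq_sym.
Qed.

Lemma weak_dual L D rho : (0 < n)%N -> GIO L -> is_diag_mx D -> psd (D - rho) ->
  bf (L rho) (phi_plus C n) (phi_plus C n) <= \tr D / n%:R.
Proof.
move=> n0 HG HD Hp.
have HG' := HG; move: HG' => [[Hl Hcp _] _].
have := CP_psd Hcp Hp (phi_plus C n).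
rewrite linB // (GIO_diag HG HD) => h.
have : 0 <= bf (D - L rho) (phi_plus C n) (phi_plus C n) := h.
by rewrite bfB subr_ge0 [bf D _ _]qf_phi // diag_sum.
Qed.

Definition rown (U : 'M[C]_n) i := \sum_j U i j * (U i j)^*.
Definition unitrows (U : 'M[C]_n) := forall i, rown U i = 1.
Definition gobj (rho U : 'M[C]_n) := \sum_i \sum_j (U *m adjmx U) i j * rho i j.

Definition krausA (U : 'M[C]_n) l : 'M[C]_n := diag_mx (\row_a U a l).
Definition LU (U : 'M[C]_n) X := \sum_l krausA U l *m X *m adjmx (krausA U l).

Lemma adjmx_diag (d : 'rV[C]_n) : adjmx (diag_mx d) = diag_mx (\row_i (d 0 i)^*).
Proof.
apply/matrixP => i j; rewrite adjmxE !mxE eq_sym.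
by case: eqP => [->|_]; rewrite ?mulr1n ?mulr0n ?conjC0.
Qed.

Lemma LU_entry U X a b : LU U X a b = (U *m adjmx U) a b * X a b.
Proof.
rewrite /LU summxE !mxE mulr_suml; apply: eq_bigr => l _.
rewrite /krausA adjmx_diag mul_diag_mx mul_mx_diag !mxE. ring.
Qed.

Lemma sigma_diag U i : unitrows U -> (U *m adjmx U) i i = 1.
Proof. by move=> HU; rewrite -(HU i) !mxE; apply: eq_bigr => j _; rewrite adjmxE. Qed.

Lemma bf_sum (I : Type) (s : seq I) (F : I -> 'M[C]_n) x y :
  bf (\sum_(l <- s) F l) x y = \sum_(l <- s) bf (F l) x y.
Proof.
rewrite /bf mulmx_sumr mulmx_suml summxE; apply: eq_bigr => l _; done.
Qed.

Lemma bf_conjmx (A B : 'M[C]_n) x y :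
  bf (A *m B *m adjmx A) x y = bf B (adjmx A *m x) (adjmx A *m y).
Proof. by rewrite /bf adjmx_mul adjmxK !mulmxA. Qed.

Lemma LU_GIO U : unitrows U -> GIO (LU U).
Proof.
move=> HU; split; last first.
  move=> i; apply/matrixP => a b; rewrite LU_entry [delta_mx i i a b]mxE.
  case: (eqVneq a i) => [->|]; last by rewrite mulr0.
  case: (eqVneq b i) => [->|]; last by rewrite mulr0.
  by rewrite sigma_diag // mulr1.
split.
- move=> a X Y; apply/matrixP => i j; rewrite !mxE !LU_entry !mxE; ring.
- move=> k B HB v.
  under eq_bigr do under eq_bigr do rewrite -/(bf _ _ _) /LU bf_sum.
  under eq_bigr do rewrite exchange_big /=.
  rewrite exchange_big /=; apply: sumr_ge0 => l _.
  under eq_bigr do under eq_bigr do rewrite bf_conjmx.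
  exact: (HB (fun i => adjmx (krausA U l) *m v i)).
- move=> X; rewrite /mxtrace; apply: eq_bigr => i _.
  by rewrite LU_entry sigma_diag // mul1r.
Qed.

Lemma LU_phi U rho : (0 < n)%N ->
  bf (LU U rho) (phi_plus C n) (phi_plus C n) = gobj rho U / n%:R.
Proof.
move=> n0; rewrite qf_phi //; congr (_ / _); apply: eq_bigr => i _.
by apply: eq_bigr => j _; rewrite LU_entry.
Qed.

End PartB.

Section Real.
Variable R : rcfType.

Lemma sqrt_facts (a : R) : 0 <= a <= 1 ->
  let d := 1 - Num.sqrt (1 - a) in [/\ 0 <= d, d <= a & 2 * d = a + d ^+ 2].
Proof.
move=> /andP[a0 a1] d.
have h0 : 0 <= 1 - a by lra.
have h1 : 1 - a <= 1 by lra.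
have s0 := sqrtr_ge0 (1 - a).
have s2 := sqr_sqrtr h0.
have s1 : Num.sqrt (1 - a) <= 1 by rewrite -{2}sqrtr1 ler_sqrt //.
split.
- rewrite /d; lra.
- have : Num.sqrt (1 - a) ^+ 2 <= Num.sqrt (1 - a).
    by rewrite expr2 ler_piMl.
  rewrite s2 /d; lra.
- rewrite /d; move: s2; set s := Num.sqrt (1 - a) => s2.
  have -> : (1 - s) ^+ 2 = 1 - 2 * s + s ^+ 2 by ring.
  rewrite s2; lra.
Qed.

Lemma negle_norm (x : R) : - x <= `|x|.
Proof. by rewrite -normrN ler_norm. Qed.

Lemma second_order n (m : 'I_n -> 'I_n -> R) (nn : 'I_n -> R) (Q : R) :
  (forall i j, m i j = m j i) -> (forall i, 0 <= nn i) ->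
  (forall t, 0 < t -> (forall i, t * nn i <= 1) ->
     \sum_i \sum_j (Num.sqrt (1 - t * nn i) * Num.sqrt (1 - t * nn j) - 1) * m i j
       + t * Q <= 0) ->
  Q <= \sum_i nn i * \sum_j m i j.
Proof.
move=> msym nn0 H.
pose y i := \sum_j m i j.
pose S := \sum_i nn i * y i.
pose N := 1 + \sum_i nn i.
have snn0 : 0 <= \sum_i nn i by apply: sumr_ge0.
have N1 : 1 <= N by rewrite /N lerDl.
have N0 : 0 < N by apply: lt_le_trans N1.
have nnN i : nn i <= N.
  have h : 0 <= \sum_(j | j != i) nn j by apply: sumr_ge0.
  rewrite /N (bigD1 i) //=; lra.
pose K := \sum_i \sum_j `|m i j| + \sum_i `|y i|.
have K0 : 0 <= K.
  by apply: addr_ge0; apply: sumr_ge0 => i _; try apply: sumr_ge0 => j _; exact: normr_ge0.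
have bound : forall t, 0 < t -> t * N <= 1 -> Q - S <= t * (N ^+ 2 * K).
  move=> t t0 tN.
  have tn1 i : t * nn i <= 1.
    by apply: le_trans tN; rewrite ler_pM2l.
  have tn0 i : 0 <= t * nn i by rewrite mulr_ge0 // ltW.
  pose d i := 1 - Num.sqrt (1 - t * nn i).
  have df i : [/\ 0 <= d i, d i <= t * nn i & 2 * d i = t * nn i + d i ^+ 2].
    by apply: sqrt_facts; rewrite tn0 tn1.
  have dN i : d i <= t * N.
    have [_ h _] := df i; apply: le_trans h _; rewrite ler_pM2l //.
  have d0 i : 0 <= d i by have [] := df i.
  have Hs := H t t0 tn1.
  have eA : \sum_i \sum_j (Num.sqrt (1 - t * nn i) * Num.sqrt (1 - t * nn j) - 1) * m i j
     = \sum_i \sum_j d i * d j * m i j - \sum_i (2 * d i) * y i.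
    have ex : \sum_i \sum_j d j * m i j = \sum_i \sum_j d i * m i j.
      rewrite exchange_big; apply: eq_bigr => i _; apply: eq_bigr => j _.
      by rewrite msym.
    have e2 : \sum_i (2 * d i) * y i = \sum_i \sum_j (d i * m i j + d j * m i j).
      under [RHS]eq_bigr do rewrite big_split /=.
      rewrite big_split /= ex -big_split /=; apply: eq_bigr => i _.
      by rewrite /y mulr_sumr -big_split /=; apply: eq_bigr => j _; ring.
    rewrite e2 -sumrB; apply: eq_bigr => i _; rewrite -sumrB; apply: eq_bigr => j _.
    rewrite /d; ring.
  have e3 : \sum_i (2 * d i) * y i = t * S + \sum_i d i ^+ 2 * y i.
    rewrite /S mulr_sumr -big_split /=; apply: eq_bigr => i _.
    by have [_ _ ->] := df i; ring.
  have b1 : \sum_i d i ^+ 2 * y i <= (t * N) ^+ 2 * \sum_i `|y i|.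
    rewrite mulr_sumr; apply: ler_sum => i _.
    apply: le_trans (_ : d i ^+ 2 * `|y i| <= _).
      by rewrite ler_wpM2l ?sqr_ge0 // ler_norm.
    rewrite ler_wpM2r // expr2 [X in _ <= X]expr2 ler_pM //.
  have b2 : - \sum_i \sum_j d i * d j * m i j <= (t * N) ^+ 2 * \sum_i \sum_j `|m i j|.
    rewrite -sumrN mulr_sumr; apply: ler_sum => i _.
    rewrite -sumrN mulr_sumr; apply: ler_sum => j _.
    rewrite -mulrN; apply: le_trans (_ : d i * d j * `|m i j| <= _).
      by rewrite ler_wpM2l ?mulr_ge0 // negle_norm.
    rewrite ler_wpM2r // expr2 ler_pM // ?mulr_ge0 //.
  rewrite eA e3 in Hs.
  have : t * (Q - S) <= t * (t * (N ^+ 2 * K)).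
    have -> : t * (t * (N ^+ 2 * K)) = (t * N) ^+ 2 * K by ring.
    rewrite /K mulrDr; lra.
  by rewrite ler_pM2l.
apply/ler_addgt0Pr => e e0.
pose c := N ^+ 2 * K.
have c0 : 0 <= c by rewrite /c mulr_ge0 // sqr_ge0.
pose t := Num.min (N^-1) (e / (c + 1)).
have t0 : 0 < t by rewrite /t lt_min invr_gt0 N0 divr_gt0 //; lra.
have tN : t * N <= 1.
  have : t <= N^-1 by rewrite /t ge_min lexx.
  by move=> h; have := ler_wpM2r (ltW N0) h; rewrite mulVf ?gt_eqF.
have tc : t * c <= e.
  have : t <= e / (c + 1) by rewrite /t ge_min lexx orbT.
  move=> h; apply: le_trans (_ : e / (c + 1) * c <= e).
    by rewrite ler_wpM2r.
  rewrite mulrAC ler_pdivrMr; last by lra.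
  rewrite ler_pM2l //; lra.
have := bound t t0 tN; rewrite -/c => h.
move: (le_trans h tc); rewrite /S /y; lra.
Qed.

End Real.

Section PartD2.
Local Open Scope complex_scope.
Local Open Scope ring_scope.
Variable R : rcfType.
Local Notation C := R[i].

Lemma ReD (a b : C) : complex.Re (a + b) = complex.Re a + complex.Re b.
Proof. by case: a; case: b. Qed.
Lemma ImD (a b : C) : complex.Im (a + b) = complex.Im a + complex.Im b.
Proof. by case: a; case: b. Qed.
Lemma ReJ (a : C) : complex.Re (Num.conj a) = complex.Re a.
Proof. by case: a. Qed.
Lemma ImJ (a : C) : complex.Im (Num.conj a) = - complex.Im a.
Proof. by case: a. Qed.
Lemma ReC (a : R) (z : C) : complex.Re (a%:C * z) = a * complex.Re z.
Proof. by case: z => x y /=; rewrite mul0r subr0. Qed.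
Lemma Re_sum (I : Type) (s : seq I) (F : I -> C) :
  complex.Re (\sum_(i <- s) F i) = \sum_(i <- s) complex.Re (F i).
Proof. by elim: s => [|a s IH]; rewrite ?big_nil ?big_cons // ReD IH. Qed.
Lemma Im_sum (I : Type) (s : seq I) (F : I -> C) :
  complex.Im (\sum_(i <- s) F i) = \sum_(i <- s) complex.Im (F i).
Proof. by elim: s => [|a s IH]; rewrite ?big_nil ?big_cons // ImD IH. Qed.
Lemma realC (a : R) : a%:C \is Num.real.
Proof. by apply/complex_realP; exists a. Qed.
Definition conjR (a : R) := conj_Creal (realC a).
Lemma conj_realM (a x : C) : a \is Num.real -> (a * x^*)^* = a * x.
Proof. move=> h; rewrite rmorphM; change (a^* * x^*^* = a * x); by rewrite conjCK conj_Creal. Qed.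
Lemma real_ReC (x : C) : x \is Num.real -> x = (complex.Re x)%:C.
Proof. by move=> /RRe_real ->. Qed.
Lemma Jzz_real (z : C) : (z^* * z) \is Num.real.
Proof. by apply: ger0_real; rewrite mulrC mul_conjC_ge0. Qed.

Variable n : nat.
Variables rho U : 'M[C]_n.
Hypothesis hrho : psd rho.
Hypothesis hU : unitrows U.
Hypothesis hopt : forall U', unitrows U' ->
  complex.Re (gobj rho U') <= complex.Re (gobj rho U).

Local Notation sig := (U *m adjmx U).

Lemma psd_gram m (V : 'M[C]_(n, m)) : psd (V *m adjmx V).
Proof.
move=> v; rewrite !mulmxA -(mulmxA (adjmx v *m V)).
have -> : adjmx v *m V = adjmx (adjmx V *m v) by rewrite adjmx_mul adjmxK.
rewrite mxE; apply: sumr_ge0 => k _; rewrite adjmxE mulrC; exact: mul_conjC_ge0.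
Qed.

Lemma psdD (X Y : 'M[C]_n) : psd X -> psd Y -> psd (X + Y).
Proof.
move=> hX hY v; rewrite mulmxDr mulmxDl mxE; apply: addr_ge0; [exact: hX|exact: hY].
Qed.

Lemma psd_conj (A X : 'M[C]_n) : psd X -> psd (A *m X *m adjmx A).
Proof. by move=> hX v; have := hX (adjmx A *m v); rewrite -/(bf _ _ _) -bf_conjmx. Qed.

Lemma rown_gram (B : 'M[C]_n) i : rown B i = (B *m adjmx B) i i.
Proof. by rewrite !mxE; apply: eq_bigr => j _; rewrite adjmxE. Qed.

Lemma herm_entry (X : 'M[C]_n) i j : adjmx X = X -> X j i = (X i j)^*.
Proof. by move=> h; rewrite -{1}h adjmxE. Qed.

Definition mm i j := complex.Re (sig i j * rho i j).
Definition nnv (c : 'cV[C]_n) i := complex.Re ((c i 0)^* * c i 0).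

Lemma sig_herm : adjmx sig = sig.
Proof. by rewrite adjmx_mul adjmxK. Qed.

Lemma mm_sym i j : mm i j = mm j i.
Proof.
rewrite /mm (herm_entry i j sig_herm) (herm_entry i j (psd_herm hrho)).
by rewrite -rmorphM ReJ.
Qed.

Lemma perturb (c : 'cV[C]_n) (t : R) : 0 < t -> (forall i, t * nnv c i <= 1) ->
  \sum_i \sum_j (Num.sqrt (1 - t * nnv c i) * Num.sqrt (1 - t * nnv c j) - 1) * mm i j
    + t * complex.Re (bf rho c c) <= 0.
Proof.
move=> t0 tn.
pose al i := Num.sqrt (1 - t * nnv c i).
pose st := Num.sqrt t.
pose A : 'M[C]_n := diag_mx (\row_i (al i)%:C).
pose be : 'cV[C]_n := \col_i (st%:C * (c i 0)^*).
pose sp := A *m sig *m adjmx A + be *m adjmx be.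
have hst : st%:C * st%:C = t%:C by rewrite -rmorphM -expr2 sqr_sqrtr // ltW.
have hnn i : (c i 0)^* * c i 0 = (nnv c i)%:C by rewrite {1}(real_ReC (Jzz_real (c i 0))).
have hal i : (al i)%:C * (al i)%:C = (1 - t * nnv c i)%:C.
  rewrite -rmorphM -expr2 sqr_sqrtr //; have := tn i; lra.
have spE i j : sp i j = (al i)%:C * (al j)%:C * sig i j + t%:C * ((c i 0)^* * c j 0).
  rewrite /sp /A adjmx_diag mul_diag_mx mul_mx_diag !mxE big_ord1 adjmxE !mxE.
  rewrite (conjR (al j)) (conj_realM _ (realC st)) -hst; ring.
have psp : psd sp.
  apply: psdD; first by apply: psd_conj; exact: psd_gram.
  exact: psd_rank1.
have [B [pB sB]] := psd_sqrt_ex psp.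
have hB : B *m adjmx B = sp by rewrite (psd_herm pB).
have uB : unitrows B.
  move=> i; rewrite rown_gram hB spE hal -rown_gram hU mulr1 hnn -!rmorphM -rmorphD.
  by rewrite subrK.
have := hopt uB; rewrite /gobj hB -subr_le0.
suff -> : complex.Re (\sum_i \sum_j sp i j * rho i j) - complex.Re (\sum_i \sum_j sig i j * rho i j)
  = \sum_i \sum_j (al i * al j - 1) * mm i j + t * complex.Re (bf rho c c) by [].
rewrite bfE !Re_sum mulr_sumr -sumrB -big_split; apply: eq_bigr => i _ /=.
rewrite !Re_sum mulr_sumr -sumrB -big_split; apply: eq_bigr => j _ /=.
rewrite spE /mm.
have -> : ((al i)%:C * (al j)%:C * sig i j + t%:C * ((c i 0)^* * c j 0)) * rho i j
   = (al i * al j)%:C * (sig i j * rho i j) + t%:C * ((c i 0)^* * rho i j * c j 0).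
  by rewrite rmorphM; ring.
rewrite ReD !ReC; ring.
Qed.

Lemma opt_cert : exists D, [/\ is_diag_mx D, psd (D - rho) & \tr D = gobj rho U].
Proof.
pose y i := \sum_j mm i j.
exists (diag_mx (\row_i (y i)%:C)); split.
- exact: diag_mx_is_diag.
- move=> c; rewrite -/(bf _ _ _) bfB bf_diag.
  rewrite (real_ReC (psd_real c hrho)).
  have -> : \sum_i (c i 0)^* * (\row_i (y i)%:C) 0 i * c i 0 = (\sum_i nnv c i * y i)%:C.
    have es : (\sum_i nnv c i * y i)%:C = \sum_i (nnv c i * y i)%:C by exact: rmorph_sum.
    rewrite es; apply: eq_bigr => i _; rewrite mxE.
    have e : (nnv c i * y i)%:C = (nnv c i)%:C * (y i)%:C := rmorphM _ _ _.
    have e2 : (nnv c i)%:C = (c i 0)^* * c i 0 by rewrite [RHS](real_ReC (Jzz_real (c i 0))).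
    rewrite e e2; ring.
  rewrite -rmorphB ler0c subr_ge0.
  apply: (second_order (m := mm)) => //; first exact: mm_sym.
    by move=> i; rewrite /nnv -ler0c -real_ReC ?Jzz_real // mulrC mul_conjC_ge0.
  move=> t t0 tn; exact: perturb.
- rewrite mxtrace_diag.
  have hIm : complex.Im (gobj rho U) = 0.
    rewrite /gobj Im_sum.
    under eq_bigr do rewrite Im_sum.
    set T := \sum_i \sum_j complex.Im (sig i j * rho i j).
    have : T = - T.
      rewrite /T {1}exchange_big -sumrN; apply: eq_bigr => i _; rewrite -sumrN.
      apply: eq_bigr => j _.
      rewrite (herm_entry i j sig_herm) (herm_entry i j (psd_herm hrho)).
      have -> : (sig i j)^* * (rho i j)^* = (sig i j * rho i j)^* by rewrite rmorphM.
      by rewrite ImJ.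
    move=> h; lra.
  have -> : gobj rho U = (complex.Re (gobj rho U))%:C.
    by case: (gobj rho U) hIm => a b /= ->.
  rewrite /gobj Re_sum rmorph_sum; apply: eq_bigr => i _; rewrite mxE Re_sum.
  done.
Qed.

End PartD2.
From mathcomp Require Import boolp classical_sets topology normedtype derive.
Import numFieldNormedType.Exports.

Section Compact.
Local Open Scope classical_set_scope.
Variable R : realType.
Local Notation C := R[i].
Variable n : nat.
Local Notation N := (n * n + n * n)%N.

Definition toU (x : 'rV[R]_N) : 'M[C]_n :=
  \matrix_(i, j) ((vec_mx (lsubmx x) i j) +i* (vec_mx (rsubmx x) i j))%C.
Definition fromU (U : 'M[C]_n) : 'rV[R]_N :=
  row_mx (mxvec (map_mx (@complex.Re R) U)) (mxvec (map_mx (@complex.Im R) U)).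
Lemma toUK U : toU (fromU U) = U.
Proof.
apply/matrixP => i j; rewrite /toU /fromU row_mxKl row_mxKr !mxvecK !mxE.
by case: (U i j).
Qed.

Definition ccont (f : 'rV[R]_N -> C) :=
  continuous (fun x => complex.Re (f x)) /\ continuous (fun x => complex.Im (f x)).

Lemma cReM (a b : C) : complex.Re (a * b) = complex.Re a * complex.Re b - complex.Im a * complex.Im b.
Proof. by case: a => ? ?; case: b. Qed.
Lemma cImM (a b : C) : complex.Im (a * b) = complex.Re a * complex.Im b + complex.Im a * complex.Re b.
Proof. by case: a => ? ?; case: b => ? ? /=; rewrite addrC. Qed.

Lemma ccont_cst c : ccont (fun _ => c).
Proof. by split => x; apply: cst_continuous. Qed.

Lemma ccontD f g : ccont f -> ccont g -> ccont (fun x => f x + g x).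
Proof.
move=> [f1 f2] [g1 g2]; split => x.
  have -> : (fun x => complex.Re (f x + g x)) = (fun x => complex.Re (f x) + complex.Re (g x)).
    by apply: funext => y; rewrite ReD.
  exact: (cvgD (f1 x) (g1 x)).
have -> : (fun x => complex.Im (f x + g x)) = (fun x => complex.Im (f x) + complex.Im (g x)).
  by apply: funext => y; rewrite ImD.
exact: (cvgD (f2 x) (g2 x)).
Qed.

Lemma ccontM f g : ccont f -> ccont g -> ccont (fun x => f x * g x).
Proof.
move=> [f1 f2] [g1 g2]; split => x.
  have -> : (fun x => complex.Re (f x * g x)) =
     (fun x => complex.Re (f x) * complex.Re (g x) - complex.Im (f x) * complex.Im (g x)).
    by apply: funext => y; rewrite cReM.
  exact: (cvgB (cvgM (f1 x) (g1 x)) (cvgM (f2 x) (g2 x))).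
have -> : (fun x => complex.Im (f x * g x)) =
     (fun x => complex.Re (f x) * complex.Im (g x) + complex.Im (f x) * complex.Re (g x)).
  by apply: funext => y; rewrite cImM.
exact: (cvgD (cvgM (f1 x) (g2 x)) (cvgM (f2 x) (g1 x))).
Qed.

Lemma ccontJ f : ccont f -> ccont (fun x => Num.conj (f x)).
Proof.
move=> [f1 f2]; split => x.
  have -> : (fun x => complex.Re (Num.conj (f x))) = (fun x => complex.Re (f x)).
    by apply: funext => y; rewrite ReJ.
  exact: f1.
have -> : (fun x => complex.Im (Num.conj (f x))) = (fun x => - complex.Im (f x)).
  by apply: funext => y; rewrite ImJ.
exact: (cvgN (f2 x)).
Qed.

Lemma ccont_sum (I : Type) (s : seq I) (F : I -> 'rV[R]_N -> C) :
  (forall i, ccont (F i)) -> ccont (fun x => \sum_(i <- s) F i x).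
Proof.
move=> HF; elim: s => [|a s IH].
  have -> : (fun x => \sum_(i <- [::]) F i x) = (fun _ => 0).
    by apply: funext => y; rewrite big_nil.
  exact: ccont_cst.
have -> : (fun x => \sum_(i <- a :: s) F i x) = (fun x => F a x + \sum_(i <- s) F i x).
  by apply: funext => y; rewrite big_cons.
exact: ccontD.
Qed.

Lemma ccont_toU i j : ccont (fun x => toU x i j).
Proof.
split.
  have -> : (fun x => complex.Re (toU x i j)) = (fun x : 'rV[R]_N => x ord0 (lshift _ (mxvec_index i j))).
    by apply: funext => y; rewrite !mxE.
  exact: coord_continuous.
have -> : (fun x => complex.Im (toU x i j)) = (fun x : 'rV[R]_N => x ord0 (rshift _ (mxvec_index i j))).
  by apply: funext => y; rewrite !mxE.
exact: coord_continuous.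
Qed.


Lemma ccont_rown i : ccont (fun x => rown (toU x) i).
Proof.
apply: ccont_sum => j; apply: ccontM; first exact: ccont_toU.
by apply: ccontJ; exact: ccont_toU.
Qed.

Lemma ccont_gobj rho : ccont (fun x => gobj rho (toU x)).
Proof.
apply: ccont_sum => i; apply: ccont_sum => j.
have -> : (fun x => (toU x *m adjmx (toU x)) i j * rho i j) =
   (fun x => (\sum_k toU x i k * Num.conj (toU x j k)) * rho i j).
  by apply: funext => y; rewrite !mxE; congr (_ * _); apply: eq_bigr => k _; rewrite !mxE.
apply: ccontM; last exact: ccont_cst.
apply: ccont_sum => k; apply: ccontM; first exact: ccont_toU.
by apply: ccontJ; exact: ccont_toU.
Qed.

Lemma Re_zJz (z : C) : complex.Re (z * Num.conj z) = complex.Re z ^+ 2 + complex.Im z ^+ 2.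
Proof. by case: z => a b /=; rewrite !expr2 mulrN opprK. Qed.
Lemma Im_zJz (z : C) : complex.Im (z * Num.conj z) = 0.
Proof. by case: z => a b /=; rewrite mulrN [b * a]mulrC addNr. Qed.

Definition Sset := [set x : 'rV[R]_N | forall i, complex.Re (rown (toU x) i) = 1].

Lemma Sset_closed : closed Sset.
Proof.
have -> : Sset = \bigcap_(i in setT) ((fun x => complex.Re (rown (toU x) i)) @^-1` [set 1]).
  apply/seteqP; split => x /= H; [move=> i _; exact: H|move=> i; exact: (H i I)].
apply: closed_bigI => i _; apply: preimage_closed; last exact: closed_eq.
by move=> y _; exact: ((ccont_rown i).1 y).
Qed.

Lemma Sset_coord x k : Sset x -> `|x ord0 k| <= 1.
Proof.
move=> Sx.
have key : forall (i j : 'I_n), complex.Re (toU x i j) ^+ 2 + complex.Im (toU x i j) ^+ 2 <= 1.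
  move=> i j; rewrite -(Sx i) /rown Re_sum (bigD1 j) //= Re_zJz lerDl.
  by apply: sumr_ge0 => l _; rewrite Re_zJz addr_ge0 // sqr_ge0.
have H2 : forall a b : R, a ^+ 2 + b ^+ 2 <= 1 -> `|a| <= 1 /\ `|b| <= 1.
  move=> a b h; split; rewrite -(expr_le1 (n:=2)) // real_normK ?num_real //.
    by apply: le_trans h; rewrite lerDl sqr_ge0.
  by apply: le_trans h; rewrite lerDr sqr_ge0.
rewrite -(splitK k); case: (split k) => a /=; case: (mxvec_indexP a) => i j.
  by have [+ _] := H2 _ _ (key i j); rewrite !mxE.
by have [_ +] := H2 _ _ (key i j); rewrite !mxE.
Qed.

Lemma Sset_bounded : bounded_set Sset.
Proof.
exists 1; split; first by rewrite num_real.
move=> M M1 x Sx /=; apply: le_trans (ltW M1).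
rewrite /Num.norm /= mx_normrE; elim/big_ind: _ => //.
  by move=> a b ha hb; rewrite ge_max ha hb.
by move=> [i j] _ /=; rewrite ord1; exact: Sset_coord.
Qed.

Lemma Sset_compact : compact Sset.
Proof. exact: bounded_closed_compact Sset_bounded Sset_closed. Qed.

Lemma Sset_fromU U : unitrows U -> Sset (fromU U).
Proof. by move=> HU i; rewrite toUK HU. Qed.

Lemma Sset_unitrows x : Sset x -> unitrows (toU x).
Proof.
move=> Sx i; have := Sx i; have : complex.Im (rown (toU x) i) = 0.
  by rewrite /rown Im_sum big1 // => j _; rewrite Im_zJz.
by case: (rown (toU x) i) => a b /= -> ->.
Qed.

Lemma unitrows1 : unitrows (1%:M : 'M[C]_n).
Proof.
move=> i; rewrite /rown (bigD1 i) //= big1 => [|j ji]; first by rewrite !mxE eqxx /= conjC1 mulr1 addr0.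
by rewrite !mxE eq_sym (negbTE ji) /= mul0r.
Qed.

Lemma exists_opt (rho : 'M[C]_n) : exists U, unitrows U /\ forall U', unitrows U' -> complex.Re (gobj rho U') <= complex.Re (gobj rho U).
Proof.
have ne : Sset !=set0 by exists (fromU 1%:M); apply: Sset_fromU; exact: unitrows1.
have cont : {within Sset, continuous (fun x => complex.Re (gobj rho (toU x)))}.
  apply: continuous_subspaceT; exact: (ccont_gobj rho).1.
have [c cS Hc] := compact_EVT_max ne Sset_compact cont.
exists (toU c); split; first by apply: Sset_unitrows; rewrite inE in cS.
move=> U' HU'; rewrite -{1}(toUK U'); apply: Hc; rewrite inE; exact: Sset_fromU.
Qed.

End Compact.

Section Misc.
Variable C : numClosedFieldType.
Variable n : nat.
Implicit Types X Y : 'M[C]_n.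

Lemma bfZm a X x y : bf (a *: X) x y = a * bf X x y.
Proof. by rewrite /bf -scalemxAr -scalemxAl mxE. Qed.

Lemma psdZ a X : 0 <= a -> psd X -> psd (a *: X).
Proof.
move=> a0 hX v; suff : 0 <= bf (a *: X) v v by [].
by rewrite bfZm mulr_ge0 //; exact: hX.
Qed.

Lemma psdD' X Y : psd X -> psd Y -> psd (X + Y).
Proof.
move=> hX hY v; rewrite mulmxDr mulmxDl mxE; apply: addr_ge0; [exact: hX|exact: hY].
Qed.

Lemma psd_diag_ge0 X i : psd X -> 0 <= X i i.
Proof. by move=> hX; rewrite -bf_delta; exact: hX. Qed.

Lemma psd_tr_ge0 X : psd X -> 0 <= \tr X.
Proof. by move=> hX; apply: sumr_ge0 => i _; exact: psd_diag_ge0. Qed.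

Lemma psd_tr0 X : psd X -> \tr X = 0 -> X = 0.
Proof.
move=> hX htr.
have hd : forall i, X i i = 0.
  move=> i; apply: (psumr_eq0P (P := predT) (F := fun i => X i i)) => //.
  by move=> k _; exact: psd_diag_ge0.
have hh := psd_herm hX.
apply/matrixP => i j; rewrite mxE.
case: (eqVneq i j) => [->|ij]; first exact: hd.
pose x := X i j; pose a := - x^*.
have h := hX (delta_mx i 0 + a *: delta_mx j 0).
rewrite -/(bf _ _ _) !bfDl !bfDr !bfZl !bfZr !bf_delta !hd in h.
have hji : X j i = x^* by rewrite -{1}hh adjmxE.
have ha : a^* = - x by rewrite /a rmorphN; change (- x^*^* = - x); rewrite conjCK.
rewrite hji ha /a in h.
have h2 : 0 <= - (x * x^*) - (x * x^*).
  move: h; congr (_ <= _); rewrite !mulr0 !addr0 ?add0r -/x; ring.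
have h3 : x * x^* = 0.
  apply/eqP; rewrite eq_le mul_conjC_ge0 andbT.
  have hz := mul_conjC_ge0 x.
  have h4 : (x * x^*) + (x * x^*) <= 0 by rewrite -oppr_ge0 opprD.
  by apply: le_trans h4; rewrite lerDl.
by move/eqP: h3; rewrite mul_conjC_eq0 => /eqP.
Qed.

Lemma is_diag_scale a X : is_diag_mx X -> is_diag_mx (a *: X).
Proof.
move=> /is_diag_mxP h; apply/is_diag_mxP => i j ij; by rewrite mxE h // mulr0.
Qed.

End Misc.

Theorem theorem2 (R : realType) (d : nat) (rho : 'M[R[i]]_d) :
  density rho ->
  exists s : R[i],
    is_robustness rho s /\
    (exists L : 'M[R[i]]_d -> 'M[R[i]]_d,
        GIO L /\ fidelity (L rho) (Phi_plus R[i] d) = normalized_robustness d s) /\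
    (forall L : 'M[R[i]]_d -> 'M[R[i]]_d,
        GIO L -> fidelity (L rho) (Phi_plus R[i] d) <= normalized_robustness d s).
Proof.
move=> [hrho htr].
have d0 : (0 < d)%N.
  case: d rho hrho htr => // rho _; rewrite /mxtrace big_ord0 => /eqP.
  by rewrite eq_sym oner_eq0.
have [U [hU hopt]] := @exists_opt R d rho.
have [D [hD hDp htrD]] := opt_cert hrho hU hopt.
pose s := gobj rho U - 1.
have e1s : 1 + s = gobj rho U by rewrite /s addrC subrK.
have fid : forall L, GIO L -> fidelity (L rho) (Phi_plus R[i] d) = bf (L rho) (phi_plus R[i] d) (phi_plus R[i] d).
  move=> L [[_ Hcp _] _]; apply: fidelity_pure; exact: CP_psd.
have dpos : 0 < (d%:R : R[i]) by rewrite ltr0n.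
have trDmr : \tr (D - rho) = s by rewrite raddfB /= htr htrD.
have s0 : 0 <= s by rewrite -trDmr; exact: psd_tr_ge0.
exists s; split; last split.
- split.
    split => //.
    have [se0|sn0] := eqVneq s 0.
      have eD : D = rho.
        by apply/eqP; rewrite -subr_eq0; apply/eqP; apply: psd_tr0 => //; rewrite trDmr.
      rewrite se0.
      exists rho; split; first by split.
      rewrite scale0r addr0 addr0 invr1 scale1r; split; first by split.
      by rewrite -eD.
    have spos : 0 < s by rewrite lt_def sn0 s0.
    exists (s^-1 *: (D - rho)); split.
      split; first by apply: psdZ => //; rewrite invr_ge0.
      by rewrite mxtraceZ trDmr mulVf.
    rewrite scalerA mulfV // scale1r (addrC rho) subrK; split; last exact: is_diag_scale.
    split.
      apply: psdZ; first by rewrite invr_ge0 e1s -e1s addr_ge0.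
      by rewrite -(subrK rho D); apply: psdD'.
    by rewrite mxtraceZ htrD -e1s mulVf // gt_eqF // ltr_pwDl.
  move=> s' [s'0 [tau [[htau htau1] [[hdelta _] hdiag]]]].
  have u1s' : 1 + s' != 0 by rewrite gt_eqF // ltr_pwDl.
  pose D' := rho + s' *: tau.
  have hD' : is_diag_mx D'.
    have -> : D' = (1 + s') *: ((1 + s')^-1 *: D') by rewrite scalerA mulfV // scale1r.
    exact: is_diag_scale.
  have hD'p : psd (D' - rho) by rewrite /D' addrC addKr; apply: psdZ.
  have := weak_dual d0 (LU_GIO hU) hD' hD'p.
  rewrite LU_phi // /D' mxtraceD mxtraceZ htr htau1 mulr1 ler_pM2r ?invr_gt0 //.
  by rewrite -e1s lerD2l.
- exists (LU U); split; first exact: LU_GIO.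
  by rewrite (fid _ (LU_GIO hU)) (LU_phi U rho d0) /normalized_robustness e1s.
- move=> L hL; rewrite fid // /normalized_robustness e1s -htrD.
  exact: weak_dual.
Qed.
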